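(* Let $a,b\in\Sigma_d$ and let $p\in\mathbb R^d_+$ satisfy $\min(a_i,b_i)\le p_i\le\max(a_i,b_i)$ for all $1\le i\le d$. Let $c=p/\sum_ip_i\in\Sigma_d$. Then $\max(\|a-c\|_1,\|b-c\|_1)\le\|a-b\|_1$.
   Context: $\Sigma_d=\{p\in\mathbb R^d_+:\sum_ip_i=1\}$ is the probability simplex; $\|\cdot\|_1$ is the $\ell_1$ norm. *)

(* Defs.v *)
From mathcomp Require Import all_boot all_order all_algebra.
Set Implicit Arguments. Unset Strict Implicit. Unset Printing Implicit Defensive.
Import Order.TTheory GRing.Theory Num.Theory.
Local Open Scope ring_scope.

Definition in_simplex (R : realFieldType) (d : nat) (p : 'I_d -> R) : Prop :=
  (forall i, 0 <= p i) /\ \sum_(i < d) p i = 1.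

Definition l1norm (R : realFieldType) (d : nat) (x : 'I_d -> R) : R :=
  \sum_(i < d) `|x i|.

(* Main.v *)
Require Import Defs.
From mathcomp Require Import all_boot all_order all_algebra.
From mathcomp Require Import lra.
Import Order.TTheory GRing.Theory Num.Theory.
Local Open Scope ring_scope.

Lemma pt_between (R : realFieldType) (x y z : R) :
  Num.min x y <= z /\ z <= Num.max x y ->
  `|x - z| + `|z - y| = `|x - y|.
Proof.
rewrite /Num.min /Num.max; case=> h1 h2.
move: h1 h2; case: (ltrP x y) => H h1 h2;
have [e1|e1] := lerP 0 (x - z); rewrite ?(ger0_norm e1) ?(ltr0_norm e1);
have [e2|e2] := lerP 0 (z - y); rewrite ?(ger0_norm e2) ?(ltr0_norm e2);
have [e3|e3] := lerP 0 (x - y); rewrite ?(ger0_norm e3) ?(ltr0_norm e3); lra.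
Qed.

Lemma one_side (R : realFieldType) (d : nat) (a b p : 'I_d -> R) :
  in_simplex b ->
  (forall i, 0 <= p i) ->
  (forall i, Num.min (a i) (b i) <= p i /\ p i <= Num.max (a i) (b i)) ->
  l1norm (fun i => a i - p i / \sum_(j < d) p j) <= l1norm (fun i => a i - b i).
Proof.
move=> [b0 b1] p0 hp; rewrite /l1norm.
set S := \sum_(j < d) p j.
have e1 : \sum_(i < d) `|a i - b i| =
   \sum_(i < d) `|a i - p i| + \sum_(i < d) `|p i - b i|.
  by rewrite -big_split /=; apply: eq_bigr => i _; rewrite pt_between.
have e2 : \sum_(i < d) `|p i - p i / S| = S * `|1 - S^-1|.
  rewrite big_distrl /=; apply: eq_bigr => i _.
  by rewrite -{1}(mulr1 (p i)) -mulrBr normrM (ger0_norm (p0 i)).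
have e3 : S * `|1 - S^-1| <= \sum_(i < d) `|p i - b i|.
  apply: le_trans (ler_norm_sum _ _ _).
  rewrite sumrB b1 -/S.
  have S0 : 0 <= S by apply: sumr_ge0.
  case: (eqVneq S 0) => [->|SN]; first by rewrite mul0r normr_ge0.
  by rewrite -{1}(ger0_norm S0) -normrM mulrBr mulr1 divff.
apply: le_trans (ler_sum _ (fun i _ => ler_distD (p i) (a i) (p i / S))) _.
rewrite big_split /= e2 e1 lerD2l //.
Qed.

Theorem lemma5 (R : realFieldType) (d : nat) (a b p : 'I_d -> R) :
  in_simplex a -> in_simplex b ->
  (forall i, 0 <= p i) ->
  (forall i, Num.min (a i) (b i) <= p i /\ p i <= Num.max (a i) (b i)) ->
  let c := fun i => p i / \sum_(j < d) p j in
  Num.max (l1norm (fun i => a i - c i)) (l1norm (fun i => b i - c i))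
    <= l1norm (fun i => a i - b i).
Proof.
move=> ha hb p0 hp /=; rewrite ge_max; apply/andP; split.
  exact: one_side.
have -> : l1norm (fun i => a i - b i) = l1norm (fun i => b i - a i).
  by rewrite /l1norm; apply: eq_bigr => i _; rewrite distrC.
apply: one_side => // i; rewrite minC maxC; exact: hp.
Qed.
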